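(* Let $\mathbb F$ be any field. The problem of classifying pairs $(A,B)$ of commuting $n\times n$ matrices over $\mathbb F$ ($n=1,2,\dots$) up to weak similarity is wild. Moreover, if $\mathbb F$ is not the field with two elements, then the problem of classifying up to weak similarity those pairs $(A,B)$ of commuting matrices over $\mathbb F$ for which $\alpha A+\beta B$ is nonsingular for some $\alpha,\beta\in\mathbb F$ is also wild.
   Context: Two pairs $(A,B)$ and $(A',B')$ of $n\times n$ matrices over $\mathbb F$ are weakly similar if $(A',B')=(S^{-1}(\alpha A+\beta B)S,\;S^{-1}(\gamma A+\delta B)S)$ for some nonsingular $S\in\mathbb F^{n\times n}$ and some nonsingular $\begin{bmatrix}\alpha&\beta\\ \gamma&\delta\end{bmatrix}\in\mathbb F^{2\times 2}$. Two pairs $(M,N)$, $(M',N')$ are similar if $(S^{-1}MS,S^{-1}NS)=(M',N')$ for some nonsingular $S$. A matrix classification problem $\mathcal M$ is given by a set $\mathcal M_1$ of tuples of matrices and a set $\mathcal M_2$ of admissible transformations. It is wild if there is a tuple $M(x,y)=(M_1(x,y),\dots,M_t(x,y))$ of matrices whose entries are noncommutative polynomials in $x,y$ over $\mathbb F$ such that (i) $M(A,B)\in\mathcal M_1$ for all $A,B\in\mathbb F^{n\times n}$, $n\ge 1$ (scalar entries $\alpha$ replaced by $\alpha I_n$), and (ii) $M(A,B)$ is carried to $M(A',B')$ by transformations from $\mathcal M_2$ iff $(A,B)$ and $(A',B')$ are similar. *)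

(* Defs.v *)
From HB Require Import structures.
From mathcomp Require Import all_boot all_order all_algebra.
Set Implicit Arguments. Unset Strict Implicit. Unset Printing Implicit Defensive.
Import Order.TTheory GRing.Theory Num.Theory.
Local Open Scope ring_scope.

(* Noncommutative polynomials in two variables x, y over F, as syntax trees.
   Every element of the free algebra F<x,y> is represented by such a term;
   only their evaluation at matrices matters below. *)
Inductive ncpoly (F : Type) : Type :=
  | NCconst of F
  | NCx
  | NCy
  | NCadd of ncpoly F & ncpoly F
  | NCmul of ncpoly F & ncpoly F.
Arguments NCx {F}.
Arguments NCy {F}.

Fixpoint ncEval (F : fieldType) (n : nat) (A B : 'M[F]_n) (p : ncpoly F)
  : 'M[F]_n :=
  match p with
  | NCconst c => c%:M
  | NCx => A
  | NCy => B
  | NCadd p q => ncEval A B p + ncEval A B q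
  | NCmul p q => ncEval A B p *m ncEval A B q
  end.

Definition ncBlockEval (F : fieldType) (k n : nat)
  (P : 'I_k -> 'I_k -> ncpoly F) (A B : 'M[F]_n)
  : 'M[F]_(\sum_(i < k) n)%N :=
  @mxblock F k k (fun _ => n) (fun _ => n) (fun i j => ncEval A B (P i j)).

Definition similar_pairs (F : fieldType) (m : nat) (M N M' N' : 'M[F]_m) : Prop :=
  exists2 S : 'M[F]_m, S \in unitmx &
    invmx S *m M *m S = M' /\ invmx S *m N *m S = N'.

Definition weakly_similar (F : fieldType) (m : nat) (A B A' B' : 'M[F]_m) : Prop :=
  exists (S : 'M[F]_m) (a b c d : F),
    [/\ S \in unitmx, a * d - b * c != 0,
        A' = invmx S *m (a *: A + b *: B) *m S &
        B' = invmx S *m (c *: A + d *: B) *m S].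

(* A classification problem for pairs of square matrices: the set M_1 is
   given by a predicate [inM1] (for every size m), the admissible
   transformations by the relation [trans] ("carried to"). *)
Definition wild_pair_problem (F : fieldType)
  (inM1 : forall m : nat, 'M[F]_m -> 'M[F]_m -> Prop)
  (trans : forall m : nat, 'M[F]_m -> 'M[F]_m -> 'M[F]_m -> 'M[F]_m -> Prop)
  : Prop :=
  exists (k : nat) (M1 M2 : 'I_k -> 'I_k -> ncpoly F),
    (forall (n : nat) (A B : 'M[F]_n), (0 < n)%N ->
       inM1 _ (ncBlockEval M1 A B) (ncBlockEval M2 A B)) /\
    (forall (n : nat) (A B A' B' : 'M[F]_n), (0 < n)%N ->
       trans _ (ncBlockEval M1 A B) (ncBlockEval M2 A B)
               (ncBlockEval M1 A' B') (ncBlockEval M2 A' B')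
       <-> similar_pairs A B A' B').

Definition commuting_pair (F : fieldType) (m : nat) (A B : 'M[F]_m) : Prop :=
  A *m B = B *m A.

Definition commuting_pair_nonsing (F : fieldType) (m : nat) (A B : 'M[F]_m) : Prop :=
  A *m B = B *m A /\ exists a b : F, a *: A + b *: B \in unitmx.

(* Main.v *)
Require Import Defs.
From HB Require Import structures.
From mathcomp Require Import all_boot all_order all_algebra.
Set Implicit Arguments. Unset Strict Implicit. Unset Printing Implicit Defensive.
Import GRing.Theory.
Local Open Scope ring_scope.

Section Aux.
Variable F : fieldType.

Definition M1 (i j : 'I_5) : ncpoly F :=
  match nat_of_ord i, nat_of_ord j with
  | 0, 0 | 1, 0 | 1, 1 | 2, 2 | 3, 1 | 3, 3 => NCconst 1
  | 3, 2 => NCx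
  | _, _ => NCconst 0
  end.
Definition M2 (i j : 'I_5) : ncpoly F :=
  match nat_of_ord i, nat_of_ord j with
  | 2, 0 | 4, 4 => NCconst 1
  | 3, 1 => NCx
  | 3, 2 => NCy
  | _, _ => NCconst 0
  end.

Variable n : nat.
Local Notation N := (\sum_(i < 5) n)%N.

Definition mk5 m (z0 z1 z2 z3 z4 : 'M[F]_(m, n)) (k : 'I_5) : 'M[F]_(m, n) :=
  match nat_of_ord k with 0 => z0 | 1 => z1 | 2 => z2 | 3 => z3 | _ => z4 end.

Definition R5 m (z0 z1 z2 z3 z4 : 'M[F]_(m, n)) : 'M[F]_(m, N) :=
  @mxrow F 5 (fun _ => n) m (mk5 z0 z1 z2 z3 z4).

Lemma rowP1 m (z0 z1 z2 z3 z4 : 'M[F]_(m, n)) (A B : 'M[F]_n) :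
  R5 z0 z1 z2 z3 z4 *m ncBlockEval M1 A B =
  R5 (z0 + z1) (z1 + z3) (z2 + z3 *m A) z3 0.
Proof.
rewrite /R5 /ncBlockEval mul_mxrow_mxblock; apply: eq_mxrow => k.
rewrite !big_ord_recl big_ord0.
case: k => [[|[|[|[|[|k]]]]] Hk] //=; rewrite /M1 /= !mul_mx_scalar ?scale1r ?scale0r;
  rewrite ?addr0 ?add0r //.
Qed.


Lemma rowP2 m (z0 z1 z2 z3 z4 : 'M[F]_(m, n)) (A B : 'M[F]_n) :
  R5 z0 z1 z2 z3 z4 *m ncBlockEval M2 A B =
  R5 z2 (z3 *m A) (z3 *m B) 0 z4.
Proof.
rewrite /R5 /ncBlockEval mul_mxrow_mxblock; apply: eq_mxrow => k.
rewrite !big_ord_recl big_ord0.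
case: k => [[|[|[|[|[|k]]]]] Hk] //=; rewrite /M2 /= !mul_mx_scalar ?scale1r ?scale0r;
  rewrite ?addr0 ?add0r //.
Qed.

Lemma R5_inj m (a0 a1 a2 a3 a4 b0 b1 b2 b3 b4 : 'M[F]_(m, n)) :
  R5 a0 a1 a2 a3 a4 = R5 b0 b1 b2 b3 b4 ->
  [/\ a0 = b0, a1 = b1, a2 = b2, a3 = b3 & a4 = b4].
Proof.
move/eq_mxrowP=> H.
by split; [exact: (H (@Ordinal 5 0 isT)) | exact: (H (@Ordinal 5 1 isT)) |
  exact: (H (@Ordinal 5 2 isT)) | exact: (H (@Ordinal 5 3 isT)) |
  exact: (H (@Ordinal 5 4 isT))].
Qed.

Definition sr m (Y : 'M[F]_(m, N)) (i : nat) : 'M[F]_(m, n) :=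
  @submxrow F 5 (fun _ => n) m Y (inord i).

Lemma R5_dec m (Y : 'M[F]_(m, N)) : Y = R5 (sr Y 0) (sr Y 1) (sr Y 2) (sr Y 3) (sr Y 4).
Proof.
rewrite -{1}(@submxrowK F 5 (fun _ => n) m Y) /R5 /sr; apply: eq_mxrow => k.
case: k => [[|[|[|[|[|k]]]]] Hk] //=; congr submxrow; apply: val_inj; by rewrite /= inordK.
Qed.

Lemma R5D m (a0 a1 a2 a3 a4 b0 b1 b2 b3 b4 : 'M[F]_(m, n)) :
  R5 a0 a1 a2 a3 a4 + R5 b0 b1 b2 b3 b4 = R5 (a0 + b0) (a1 + b1) (a2 + b2) (a3 + b3) (a4 + b4).
Proof.
rewrite /R5 -mxrowD; apply: eq_mxrow => k; by case: k => [[|[|[|[|[|k]]]]] Hk].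
Qed.

Lemma R5Z m c (a0 a1 a2 a3 a4 : 'M[F]_(m, n)) :
  c *: R5 a0 a1 a2 a3 a4 = R5 (c *: a0) (c *: a1) (c *: a2) (c *: a3) (c *: a4).
Proof.
apply/matrixP => i j; rewrite /R5 /mxrow !mxE.
by case: (tagnat.sig1 j) => [[|[|[|[|[|k]]]]] Hk]; rewrite /= mxE.
Qed.

Lemma R5M m p (M : 'M[F]_(p, m)) (a0 a1 a2 a3 a4 : 'M[F]_(m, n)) :
  M *m R5 a0 a1 a2 a3 a4 = R5 (M *m a0) (M *m a1) (M *m a2) (M *m a3) (M *m a4).
Proof.
rewrite /R5 mul_mxrow; apply: eq_mxrow => k; by case: k => [[|[|[|[|[|k]]]]] Hk].
Qed.

Lemma R5_0 m : R5 0 0 0 0 0 = 0 :> 'M[F]_(m, N).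
Proof.
rewrite /R5 -(@mxrow0 F 5 (fun _ => n) m); apply: eq_mxrow => k.
by case: k => [[|[|[|[|[|k]]]]] Hk].
Qed.

Definition lin m (z0 z1 z2 z3 z4 : 'M[F]_(m, n)) (s : nat -> nat -> 'M[F]_n) (j : nat) :=
  z0 *m s 0%N j + z1 *m s 1%N j + z2 *m s 2%N j + z3 *m s 3%N j + z4 *m s 4%N j.

Definition BS (s : nat -> nat -> 'M[F]_n) : 'M[F]_N :=
  @mxblock F 5 5 (fun _ => n) (fun _ => n) (fun i j => s i j).

Lemma rowS m (z0 z1 z2 z3 z4 : 'M[F]_(m, n)) s :
  R5 z0 z1 z2 z3 z4 *m BS s =
  R5 (lin z0 z1 z2 z3 z4 s 0) (lin z0 z1 z2 z3 z4 s 1) (lin z0 z1 z2 z3 z4 s 2)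
     (lin z0 z1 z2 z3 z4 s 3) (lin z0 z1 z2 z3 z4 s 4).
Proof.
rewrite /R5 /BS mul_mxrow_mxblock; apply: eq_mxrow => k.
rewrite !big_ord_recl big_ord0 addr0 !addrA.
by case: k => [[|[|[|[|[|k]]]]] Hk].
Qed.

Lemma BS_dec (S : 'M[F]_N) :
  S = BS (fun i j => @submxblock F 5 5 (fun _ => n) (fun _ => n) S (inord i) (inord j)).
Proof.
rewrite -{1}(@submxblockK F 5 5 (fun _ => n) (fun _ => n) S) /BS.
by apply: eq_mxblock => i j; rewrite !inord_val.
Qed.

Lemma row_ext (M M' : 'M[F]_N) :
  (forall z0 z1 z2 z3 z4 : 'M[F]_(N, n),
     R5 z0 z1 z2 z3 z4 *m M = R5 z0 z1 z2 z3 z4 *m M') -> M = M'.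
Proof.
move=> H; rewrite -(mul1mx M) -(mul1mx M') (R5_dec 1%:M); exact: H.
Qed.


Local Notation P1 A B := (ncBlockEval M1 A B).
Local Notation P2 A B := (ncBlockEval M2 A B).

Lemma P12_comm (A B : 'M[F]_n) : P1 A B *m P2 A B = P2 A B *m P1 A B.
Proof.
apply: row_ext => z0 z1 z2 z3 z4.
by rewrite !mulmxA !(rowP1, rowP2) mul0mx !addr0.
Qed.

Lemma P12_unit (A B : 'M[F]_n) : P1 A B + P2 A B \in unitmx.
Proof.
pose e i := sr (1%:M : 'M[F]_N) i.
pose z3 := e 3%N; pose z4 := e 4%N.
pose z2 := e 2%N - (z3 *m A + z3 *m B).
pose z1 := e 1%N - (z3 + z3 *m A).
pose z0 := e 0%N - (z1 + z2).
suff H : R5 z0 z1 z2 z3 z4 *m (P1 A B + P2 A B) = 1%:M by case: (mulmx1_unit H).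
rewrite mulmxDr rowP1 rowP2 R5D (R5_dec 1%:M) -/(e _) -/(e _) -/(e _) -/(e _) -/(e _).
rewrite !addr0 add0r; congr R5.
- by rewrite /z0 -addrA subrK.
- by rewrite /z1 -addrA subrK.
- by rewrite /z2 -addrA subrK.
Qed.

Lemma one_neq0 : (0 < n)%N -> (1%:M : 'M[F]_n) != 0.
Proof.
move=> Hn; apply/eqP => /matrixP/(_ (Ordinal Hn) (Ordinal Hn)).
rewrite !mxE eqxx /= => /eqP; by rewrite oner_eq0.
Qed.


Definition Dg (T : 'M[F]_n) := BS (fun i j => if i == j then T else 0).

Lemma rowDg m (z0 z1 z2 z3 z4 : 'M[F]_(m, n)) T :
  R5 z0 z1 z2 z3 z4 *m Dg T = R5 (z0 *m T) (z1 *m T) (z2 *m T) (z3 *m T) (z4 *m T).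
Proof. by rewrite /Dg rowS /lin /= !mulmx0 !addr0 !add0r. Qed.

Lemma sim_to_weak (A B A' B' : 'M[F]_n) :
  similar_pairs A B A' B' -> weakly_similar (P1 A B) (P2 A B) (P1 A' B') (P2 A' B').
Proof.
case=> T Tu [eA eB].
have SS : Dg T *m Dg (invmx T) = 1%:M.
  apply: row_ext => z0 z1 z2 z3 z4.
  by rewrite mulmx1 mulmxA !rowDg !mulmxK.
have Su : Dg T \in unitmx by case: (mulmx1_unit SS).
have key : forall M M' : 'M[F]_N, Dg T *m M' = M *m Dg T -> M' = invmx (Dg T) *m M *m Dg T.
  by move=> M M' e; rewrite -mulmxA -e mulKmx.
exists (Dg T), 1, 0, 0, 1; split => //.
- by rewrite mulr1 mulr0 subr0 oner_eq0.
- rewrite scale1r scale0r addr0; apply: key; apply: row_ext => z0 z1 z2 z3 z4.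
  rewrite !mulmxA rowDg !rowP1 rowDg -eA !mulmxA mulmxK //.
  by rewrite !mulmxDl mul0mx.
- rewrite scale1r scale0r add0r; apply: key; apply: row_ext => z0 z1 z2 z3 z4.
  rewrite !mulmxA rowDg !rowP2 rowDg -eA -eB !mulmxA !mulmxK //.
  by rewrite mul0mx.
Qed.


Lemma sc_one m p (x : 'M[F]_(m, p)) c : x = c *: x -> x != 0 -> c = 1.
Proof.
move=> e nz; have : (1 - c) *: x = 0 by rewrite scalerBl scale1r -e subrr.
move/eqP; rewrite scaler_eq0 (negbTE nz) orbF subr_eq0 => /eqP <-//.
Qed.

Lemma sc_zero m p (x : 'M[F]_(m, p)) c : 0 = c *: x -> x != 0 -> c = 0.
Proof. by move=> /esym/eqP; rewrite scaler_eq0 => /orP[/eqP//|x0 nz]; rewrite x0 in nz. Qed.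

Lemma sc_nz m p (x : 'M[F]_(m, p)) c : 0 = c *: x -> c != 0 -> x = 0.
Proof. by move=> /esym/eqP; rewrite scaler_eq0 => /orP[/eqP c0|/eqP//]; rewrite c0 eqxx. Qed.

Lemma sc_fix0 m p (x : 'M[F]_(m, p)) c : x = c *: x -> c != 1 -> x = 0.
Proof. by move=> e nc; case: (eqVneq x 0) => // nz; move: nc; rewrite (sc_one e nz) eqxx. Qed.

Lemma EL m (Y : 'M[F]_(m, N)) A B l u :
  Y != 0 -> Y *m P1 A B = l *: Y -> Y *m P2 A B = u *: Y ->
  (l = 1 /\ u = 0) \/ (l = 0 /\ u = 1).
Proof.
rewrite (R5_dec Y); set z0 := sr Y 0; set z1 := sr Y 1; set z2 := sr Y 2;
  set z3 := sr Y 3; set z4 := sr Y 4.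
move=> nz; rewrite rowP1 rowP2 !R5Z => /R5_inj [k0 k1 k2 k3 k4] /R5_inj [m0 m1 m2 m3 m4].
case: (eqVneq l 1) => [l1|l1].
  left; split => //; move: k4; rewrite l1 scale1r => k4.
  case: (eqVneq u 0) => // u0; exfalso; move/negP: nz; apply.
  have e3 : z3 = 0 by apply: sc_nz m3 u0.
  have e2 : z2 = 0 by apply: (sc_nz _ u0); rewrite -m2 e3 mul0mx.
  have e1 : z1 = 0 by apply: (sc_nz _ u0); rewrite -m1 e3 mul0mx.
  have e0 : z0 = 0 by apply: (sc_nz _ u0); rewrite -m0 e2.
  by rewrite e0 e1 e2 e3 -k4 R5_0.
have e3 : z3 = 0 by apply: sc_fix0 k3 l1.
have e2 : z2 = 0 by apply: sc_fix0 l1; rewrite -k2 e3 mul0mx addr0.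
have e1 : z1 = 0 by apply: sc_fix0 l1; rewrite -k1 e3 addr0.
have e0 : z0 = 0 by apply: sc_fix0 l1; rewrite -k0 e1 addr0.
have nz4 : z4 != 0 by apply: contraNneq nz => e4; rewrite e0 e1 e2 e3 e4 R5_0.
right; split; first exact: sc_zero k4 nz4.
exact: sc_one m4 nz4.
Qed.

Lemma KerP1 m (Y : 'M[F]_(m, N)) A B : Y *m P1 A B = 0 -> Y *m P2 A B = Y.
Proof.
rewrite (R5_dec Y); set z0 := sr Y 0; set z1 := sr Y 1; set z2 := sr Y 2;
  set z3 := sr Y 3; set z4 := sr Y 4.
rewrite rowP1 -(R5_0 m) => /R5_inj [k0 k1 k2 k3 _].
have e1 : z1 = 0 by rewrite -k1 k3 addr0.
have e0 : z0 = 0 by rewrite -k0 e1 addr0.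
have e2 : z2 = 0 by rewrite -k2 k3 mul0mx addr0.
by rewrite rowP2 e0 e1 e2 k3 !mul0mx.
Qed.

Lemma solve2 m p (P Q U V : 'M[F]_(m, p)) a b c d :
  a *: P + b *: Q = U -> c *: P + d *: Q = V ->
  (a * d - b * c) *: P = d *: U - b *: V /\ (a * d - b * c) *: Q = a *: V - c *: U.
Proof.
move=> <- <-; split.
  rewrite scalerBl !scalerDr !scalerA (mulrC d a) (mulrC d b) opprD addrACA subrr addr0.
  by [].
rewrite scalerBl !scalerDr !scalerA (mulrC c a) (mulrC c b) opprD addrACA subrr add0r.
by rewrite (mulrC b c).
Qed.


Lemma addl0 m p (x y : 'M[F]_(m, p)) : x + y = x -> y = 0.
Proof. by move/(congr1 (fun t => t - x)); rewrite addrC addKr subrr. Qed.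

Lemma invsc m p (x y : 'M[F]_(m, p)) D : D != 0 -> D *: x = y -> x = (D^-1) *: y.
Proof. by move=> nz <-; rewrite scalerA mulVf // scale1r. Qed.

Lemma fromEL1 (D x : F) : D != 0 -> D^-1 * x = 1 -> x = D.
Proof. by move=> nz e; rewrite -(mulVKf nz x) e mulr1. Qed.

Lemma fromEL0 (D x : F) : D != 0 -> D^-1 * x = 0 -> x = 0.
Proof. by move=> nz e; rewrite -(mulVKf nz x) e mulr0. Qed.

Lemma weak_to_sim (A B A' B' : 'M[F]_n) : (0 < n)%N ->
  weakly_similar (P1 A B) (P2 A B) (P1 A' B') (P2 A' B') -> similar_pairs A B A' B'.
Proof.
move=> Hn [S [a [b [c [d [Su hD e1 e2]]]]]].
have hQ : forall w : 'M[F]_(n, N),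
    w *m invmx S *m (a *: P1 A B + b *: P2 A B) = w *m P1 A' B' *m invmx S.
  by move=> w; rewrite e1 !mulmxA mulmxK.
have hR : forall w : 'M[F]_(n, N),
    w *m invmx S *m (c *: P1 A B + d *: P2 A B) = w *m P2 A' B' *m invmx S.
  by move=> w; rewrite e2 !mulmxA mulmxK.
have eL : forall (Y : 'M[F]_(n, N)) x y,
    Y *m (x *: P1 A B + y *: P2 A B) = x *: (Y *m P1 A B) + y *: (Y *m P2 A B).
  by move=> Y x y; rewrite mulmxDr -!scalemxAr.
pose d0 := R5 (1%:M : 'M[F]_n) 0 0 0 0.
pose d1 := R5 0 (1%:M : 'M[F]_n) 0 0 0.
pose d4 := R5 0 0 0 0 (1%:M : 'M[F]_n).
have d0P1 : d0 *m P1 A' B' = d0 by rewrite rowP1 mul0mx !addr0.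
have d0P2 : d0 *m P2 A' B' = 0 by rewrite rowP2 !mul0mx R5_0.
have d4P1 : d4 *m P1 A' B' = 0 by rewrite rowP1 mul0mx !addr0 R5_0.
have d4P2 : d4 *m P2 A' B' = d4 by rewrite rowP2 !mul0mx.
have d1P1 : d1 *m P1 A' B' = d0 + d1 by rewrite rowP1 R5D mul0mx !addr0 !add0r.
have d1P2 : d1 *m P2 A' B' = 0 by rewrite rowP2 !mul0mx R5_0.
have nzS : forall w : 'M[F]_(n, N), w != 0 -> w *m invmx S != 0.
  move=> w; apply: contraNneq => e.
  have -> : w = w *m invmx S *m S by rewrite mulmxKV.
  by rewrite e mul0mx.
have d0nz : d0 != 0.
  apply/eqP; rewrite -(R5_0 n) /d0 => /R5_inj [h _ _ _ _].
  by move: (one_neq0 Hn); rewrite h eqxx.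
have d4nz : d4 != 0.
  apply/eqP; rewrite -(R5_0 n) /d4 => /R5_inj [_ _ _ _ h].
  by move: (one_neq0 Hn); rewrite h eqxx.
set Y0 := d0 *m invmx S.
set Y1 := d1 *m invmx S.
set Y4 := d4 *m invmx S.
have Y0nz : Y0 != 0 by apply: nzS.
have Y4nz : Y4 != 0 by apply: nzS.
have Y0Q : a *: (Y0 *m P1 A B) + b *: (Y0 *m P2 A B) = Y0 by rewrite -eL hQ d0P1.
have Y0R : c *: (Y0 *m P1 A B) + d *: (Y0 *m P2 A B) = 0 by rewrite -eL hR d0P2 mul0mx.
have Y4Q : a *: (Y4 *m P1 A B) + b *: (Y4 *m P2 A B) = 0 by rewrite -eL hQ d4P1 mul0mx.
have Y4R : c *: (Y4 *m P1 A B) + d *: (Y4 *m P2 A B) = Y4 by rewrite -eL hR d4P2.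
have Y1Q : a *: (Y1 *m P1 A B) + b *: (Y1 *m P2 A B) = Y0 + Y1
  by rewrite -eL hQ d1P1 mulmxDl.
have Y1R : c *: (Y1 *m P1 A B) + d *: (Y1 *m P2 A B) = 0 by rewrite -eL hR d1P2 mul0mx.
have H0 : (d = a * d - b * c /\ c = 0) \/ (d = 0 /\ - c = a * d - b * c).
  have [h1 h2] := solve2 Y0Q Y0R.
  rewrite scaler0 subr0 in h1; rewrite scaler0 sub0r -scaleNr in h2.
  move/(invsc hD): h1; rewrite scalerA => h1.
  move/(invsc hD): h2; rewrite scalerA => h2.
  case: (EL Y0nz h1 h2) => [[l1 l2]|[l1 l2]].
    left; split; first exact: fromEL1 l1.
    by apply/eqP; rewrite -oppr_eq0; apply/eqP; exact: fromEL0 l2.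
  by right; split; [exact: fromEL0 l1 | exact: fromEL1 l2].
have H4 : (- b = a * d - b * c /\ a = 0) \/ (b = 0 /\ a = a * d - b * c).
  have [h1 h2] := solve2 Y4Q Y4R.
  rewrite scaler0 sub0r -scaleNr in h1; rewrite scaler0 subr0 in h2.
  move/(invsc hD): h1; rewrite scalerA => h1.
  move/(invsc hD): h2; rewrite scalerA => h2.
  case: (EL Y4nz h1 h2) => [[l1 l2]|[l1 l2]].
    by left; split; [exact: fromEL1 l1 | exact: fromEL0 l2].
  right; split; last exact: fromEL1 l2.
  by apply/eqP; rewrite -oppr_eq0; apply/eqP; exact: fromEL0 l1.
have [[ha [hb [hc hd]]] | [ha hd]] : (a = 1 /\ b = 0 /\ c = 0 /\ d = 1) \/ (a = 0 /\ d = 0).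
- case: H0 => [[hd hc]|[hd hc]]; case: H4 => [[hb ha]|[hb ha]].
  + by move: hD; rewrite ha hc mul0r mulr0 subrr eqxx.
  + left; move: hD; rewrite hb hc mul0r subr0 => nz.
    have a0 : a != 0 by apply: contraNneq nz => ->; rewrite mul0r.
    have hd1 : d = 1.
      by apply: (mulfI a0); rewrite mulr1 {2}ha hb hc mul0r subr0.
    have ha1 : a = 1 by move: hd; rewrite hd1 hb hc mul0r subr0 mulr1.
    by [].
  + by right.
  + by move: hD; rewrite hb hd mul0r mulr0 subrr eqxx.
- have SP1 : S *m P1 A' B' = P1 A B *m S.
    by rewrite e1 ha hb scale1r scale0r addr0 !mulmxA mulmxV // mul1mx.
  have SP2 : S *m P2 A' B' = P2 A B *m S.
    by rewrite e2 hc hd scale1r scale0r add0r !mulmxA mulmxV // mul1mx.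

  have [s Ss] : exists s, S = BS s by eexists; exact: BS_dec.
  rewrite Ss in SP1 SP2 Su.
  have := congr1 (mulmx d0) SP1; have := congr1 (mulmx d0) SP2.
  have := congr1 (mulmx d1) SP1; have := congr1 (mulmx d1) SP2.
  have := congr1 (mulmx (R5 0 0 (1%:M : 'M[F]_n) 0 0)) SP1.
  have := congr1 (mulmx (R5 0 0 (1%:M : 'M[F]_n) 0 0)) SP2.
  have := congr1 (mulmx (R5 0 0 0 (1%:M : 'M[F]_n) 0)) SP1.
  have := congr1 (mulmx (R5 0 0 0 (1%:M : 'M[F]_n) 0)) SP2.
  rewrite /d0 /d1 !mulmxA !(rowS, rowP1, rowP2) /lin /=.
  rewrite !mul1mx !mul0mx !addr0 !add0r.
  cbv beta.
  rewrite !mul1mx !mul0mx !addr0 !add0r.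
  move=> /R5_inj [_ _ q3 _ _] /R5_inj [_ p2 p3 _ _] /R5_inj [r1 _ _ _ _]
    /R5_inj [t1 _ _ _ _] /R5_inj [u1 _ _ _ _] /R5_inj [v1 _ _ _ _]
    /R5_inj [w1 _ _ _ _] /R5_inj [x1 x2 _ _ x5].
  have s01 : s 0%N 1%N = 0 by apply: addl0 x1.
  have s03 : s 0%N 3%N = 0 by apply: addl0 x2.
  have s21 : s 2%N 1%N = 0 by apply: addl0 t1.
  have s11 : s 1%N 1%N = s 0%N 0%N by move: v1; rewrite [s 0%N 0%N + _]addrC => /addrI.
  have s33 : s 3%N 3%N = s 0%N 0%N.
    by move: p2; rewrite s21 mulmx0 addr0 s11 [s 0%N 0%N + _]addrC => /addrI.
  have AT : s 0%N 0%N *m A' = A *m s 0%N 0%N.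
    by move: p3; rewrite u1 r1 s33 add0r [_ + s 3%N 2%N]addrC => /addrI.
  have BT : s 0%N 0%N *m B' = B *m s 0%N 0%N.
    by move: q3; rewrite u1 mulmx0 add0r r1 s33.
  have dS : d0 *m BS s = s 0%N 0%N *m d0.
    rewrite /d0 rowS R5M /lin /= ?mul1mx ?mul0mx ?addr0 ?add0r ?mulmx0.
    cbv beta; by rewrite mulmx1 s01 w1 s03 -x5.
  have Tu : s 0%N 0%N \in unitmx.
    have : d0 = s 0%N 0%N *m (d0 *m invmx (BS s)) by rewrite mulmxA -dS mulmxK.
    rewrite {1}(R5_dec (d0 *m invmx (BS s))) R5M /d0 => /R5_inj [h _ _ _ _].
    by case: (mulmx1_unit (esym h)).
  exists (s 0%N 0%N) => //; split.
    by rewrite -mulmxA -AT mulKmx.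
  by rewrite -mulmxA -BT mulKmx.
exfalso.
move: hD; rewrite ha hd mul0r sub0r oppr_eq0 mulf_eq0 negb_or => /andP[bnz cnz].
rewrite ha scale0r add0r in Y0Q; rewrite ha scale0r add0r in Y1Q.
rewrite hd scale0r addr0 in Y0R; rewrite hd scale0r addr0 in Y1R.
have K0 : Y0 *m P1 A B = 0 by apply: (sc_nz (esym Y0R)).
have K1 : Y1 *m P1 A B = 0 by apply: (sc_nz (esym Y1R)).
rewrite (KerP1 K0) in Y0Q; rewrite (KerP1 K1) in Y1Q.
have b1 : b = 1 by apply: (sc_one (esym Y0Q)).
rewrite b1 scale1r in Y1Q.
move/negP: Y0nz; apply; apply/eqP.
by rewrite -(addrK Y1 Y0) -Y1Q subrr.
Qed.

End Aux.

Theorem theorem1 (F : fieldType) :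
  wild_pair_problem (@commuting_pair F) (@weakly_similar F) /\
  ((exists x : F, x != 0 /\ x != 1) ->
   wild_pair_problem (@commuting_pair_nonsing F) (@weakly_similar F)).
Proof.
split.
  exists 5, (M1 F), (M2 F); split; first by move=> n A B _; exact: P12_comm.
  by move=> n A B A' B' Hn; split; [exact: weak_to_sim | exact: sim_to_weak].
move=> _; exists 5, (M1 F), (M2 F); split.
  move=> n A B _; split; first exact: P12_comm.
  by exists 1, 1; rewrite !scale1r; exact: P12_unit.
by move=> n A B A' B' Hn; split; [exact: weak_to_sim | exact: sim_to_weak].
Qed.
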